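(* Let $X=\prod_{i=1}^n X_i$ be a finite set and $\langle\mathcal A,\mathcal U\rangle$ a linear twofold partition of $X$ (satisfying the standing assumptions). Then $\langle\mathcal A,\mathcal U\rangle$ has a representation in Model $F^{\underline u}$ if and only if $\mathcal A_*$ is a maximal antichain of the poset $(X,\succsim)$.
   Context: Setting. $N=\{1,\dots,n\}$, $n\ge2$. $(y_i,x_{-i})$ denotes $x$ with $i$-th coordinate replaced by $y_i$; $a_{-i}$ ranges over $\prod_{j\ne i}X_j$. A twofold partition $\langle\mathcal A,\mathcal U\rangle$ of $X$: disjoint sets with union $X$. Define $x_i\succsim_i y_i$ iff [for all $a_{-i}$, $(y_i,a_{-i})\in\mathcal A\Rightarrow(x_i,a_{-i})\in\mathcal A$]. Standing assumptions: every attribute is influential (exist $x_i,y_i,a_{-i}$ with $(x_i,a_{-i})\in\mathcal A$, $(y_i,a_{-i})\in\mathcal U$) and each $\succsim_i$ is antisymmetric. Linear: for all $i$, $x_i,y_i$, $a_{-i},b_{-i}$, if $(x_i,a_{-i})\in\mathcal A$ and $(y_i,b_{-i})\in\mathcal A$ then $(y_i,a_{-i})\in\mathcal A$ or $(x_i,b_{-i})\in\mathcal A$ (equivalently, each $\succsim_i$ is complete, hence a linear order here). $x\succsim y$ iff $x_i\succsim_i y_i$ for all $i$ (a partial order on $X$), with asymmetric part $\succ$. $\mathcal A_*$ is the set of minimal elements of $\mathcal A$ for $\succsim$. An antichain is a set of pairwise $\succsim$-incomparable elements; it is maximal if no element of $X$ can be added to it keeping it an antichain. Model $F^{u}$: there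 are semiorders $S_i$ on $X_i$ (reflexive, Ferrers: $xS_iy, zS_iw\Rightarrow xS_iw$ or $zS_iy$; semitransitive: $xS_iy, yS_iz\Rightarrow xS_iw$ or $wS_iz$), the relation $S$ on $X$ given by $xSy$ iff $x_iS_iy_i$ for all $i\in N$ with asymmetric part $P$, and a set $\mathcal P\subseteq X$ with no $p,q\in\mathcal P$ satisfying $pPq$, such that for all $x$: $x\in\mathcal U$ iff [$pPx$ for some $p\in\mathcal P$ and not $xPq$ for all $q\in\mathcal P$]. Model $F^{\underline u}$: Model $F^{u}$ with a representation in which $S_i=\succsim_i$ for all $i$ (so $S=\succsim$, $P=\succ$). *)

(* Defs.v *)
From mathcomp Require Import all_boot.
Unset Printing Implicit Defensive.

Section Defs.
Variables (n : nat) (T : 'I_n -> finType).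

Definition prodX := {dffun forall i : 'I_n, T i}.

(* (y_i, x_{-i}) : x with its i-th coordinate replaced by y. *)
Definition upd (x : prodX) (i : 'I_n) (y : T i) : prodX :=
  [ffun j => match i =P j with
             | ReflectT e => ecast k (T k) e y
             | ReflectF _ => x j end].

(* The twofold partition <A, U> is given by A; U is its complement in X. *)
Variable A : prodX -> bool.
Definition inU (x : prodX) : Prop := ~~ A x.

(* x_i >=_i y_i : for all a_{-i}, (y_i,a_{-i}) in A => (x_i,a_{-i}) in A.
   a_{-i} is represented by a full profile a whose i-th coordinate is overridden. *)
Definition pref (i : 'I_n) (xi yi : T i) : Prop :=
  forall a : prodX, A (upd a i yi) -> A (upd a i xi).

Definition influential (i : 'I_n) : Prop :=
  exists (xi yi : T i) (a : prodX), A (upd a i xi) /\ inU (upd a i yi).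

Definition pref_antisym (i : 'I_n) : Prop :=
  forall xi yi : T i, pref i xi yi -> pref i yi xi -> xi = yi.

Definition linear_partition : Prop :=
  forall (i : 'I_n) (xi yi : T i) (a b : prodX),
    A (upd a i xi) -> A (upd b i yi) -> A (upd a i yi) \/ A (upd b i xi).

Definition dom (x y : prodX) : Prop := forall i, pref i (x i) (y i).
Definition sdom (x y : prodX) : Prop := dom x y /\ ~ dom y x.

Definition Amin (x : prodX) : Prop := A x /\ ~ (exists y, A y /\ sdom x y).

Definition antichain (S : prodX -> Prop) : Prop :=
  forall x y, S x -> S y -> (dom x y \/ dom y x) -> x = y.

Definition maximal_antichain (S : prodX -> Prop) : Prop :=
  antichain S /\
  forall z : prodX, antichain (fun x => S x \/ x = z) -> S z.

Definition semiorder (U : Type) (R : U -> U -> Prop) : Prop :=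
  (forall x, R x x) /\
  (forall x y z w, R x y -> R z w -> R x w \/ R z y) /\
  (forall x y z w, R x y -> R y z -> R x w \/ R w z).

Definition prodS (S : forall i, T i -> T i -> Prop) (x y : prodX) : Prop :=
  forall i, S i (x i) (y i).
Definition prodP (S : forall i, T i -> T i -> Prop) (x y : prodX) : Prop :=
  prodS S x y /\ ~ prodS S y x.

Definition represents (S : forall i, T i -> T i -> Prop) (Pset : prodX -> Prop) : Prop :=
  (forall p q, Pset p -> Pset q -> ~ prodP S p q) /\
  (forall x, inU x <->
     ((exists p, Pset p /\ prodP S p x) /\ (forall q, Pset q -> ~ prodP S x q))).

Definition model_Fu : Prop :=
  exists (S : forall i, T i -> T i -> Prop) (Pset : prodX -> Prop),
    (forall i, semiorder _ (S i)) /\ represents S Pset.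

Definition model_Fu_under : Prop :=
  exists (S : forall i, T i -> T i -> Prop) (Pset : prodX -> Prop),
    (forall i, semiorder _ (S i)) /\ (forall i, S i = @pref i) /\ represents S Pset.

End Defs.

Arguments upd {n T}.
Arguments inU {n T}.
Arguments pref {n T}.
Arguments influential {n T}.
Arguments pref_antisym {n T}.
Arguments linear_partition {n T}.
Arguments dom {n T}.
Arguments sdom {n T}.
Arguments Amin {n T}.
Arguments antichain {n T}.
Arguments maximal_antichain {n T}.
Arguments semiorder {U}.
Arguments prodS {n T}.
Arguments prodP {n T}.
Arguments represents {n T}.
Arguments model_Fu {n T}.
Arguments model_Fu_under {n T}.

(* Main.v *)
Require Import Defs.
From mathcomp Require Import all_boot.
From Stdlib Require Import Classical FunctionalExtensionality.
Set Implicit Arguments.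
Unset Strict Implicit.

Section Proof.
Variables (n : nat) (T : 'I_n -> finType) (A : prodX n T -> bool).

Lemma upd_same (a : prodX n T) i v : upd a i v i = v.
Proof.
rewrite /upd ffunE; case: eqP => [e|] //.
by rewrite (eq_axiomK e).
Qed.

Lemma upd_other (a : prodX n T) i v j : i != j -> upd a i v j = a j.
Proof. by move=> ne; rewrite /upd ffunE; case: eqP => // e; rewrite e eqxx in ne. Qed.

Lemma upd_id (a : prodX n T) i : upd a i (a i) = a.
Proof.
apply/ffunP => j; case: (eqVneq i j) => [<-|ne]; first by rewrite upd_same.
by rewrite upd_other.
Qed.

Lemma dom_refl x : dom A x x.
Proof. by move=> i a. Qed.

Lemma dom_trans x y z : dom A x y -> dom A y z -> dom A x z.
Proof. by move=> H1 H2 i a Ha; apply: H1; apply: H2. Qed.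

Hypothesis Hanti : forall i, pref_antisym A i.

Lemma dom_anti x y : dom A x y -> dom A y x -> x = y.
Proof. by move=> H1 H2; apply/ffunP => i; apply: Hanti. Qed.

Definition mix (x y : prodX n T) (k : nat) : prodX n T :=
  [ffun j : 'I_n => if (j < k)%N then x j else y j].

Lemma up x y : A y -> dom A x y -> A x.
Proof.
move=> Ay Hd.
have key : forall k, (k <= n)%N -> A (mix x y k).
  elim => [_|k IH lt].
    by have -> : mix x y 0 = y by apply/ffunP => j; rewrite ffunE.
  have Ak := IH (ltnW lt).
  pose i := Ordinal lt.
  have E : mix x y k.+1 = upd (mix x y k) i (x i).
    apply/ffunP => j; case: (eqVneq i j) => [<-|ne].
      by rewrite upd_same ffunE /= ltnSn.
    rewrite upd_other // !ffunE.
    have nj : (j : nat) != k.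
      by apply/eqP => e; move: ne; rewrite (_ : i = j) ?eqxx //; apply/val_inj.
    by rewrite ltnS leq_eqVlt (negbTE nj).
  rewrite E; apply: Hd.
  have -> : y i = mix x y k i by rewrite ffunE /= ltnn.
  by rewrite upd_id.
have -> : x = mix x y n by apply/ffunP => j; rewrite ffunE ltn_ord.
exact: key.
Qed.

Definition domb (x y : prodX n T) : bool :=
  [forall i, [forall a, A (upd a i (y i)) ==> A (upd a i (x i))]].

Lemma domP x y : reflect (dom A x y) (domb x y).
Proof.
apply: (iffP forallP) => H i.
- by move=> a Ha; move/forallP: (H i) => /(_ a)/implyP; apply.
- by apply/forallP => a; apply/implyP; apply: H.
Qed.

Lemma exists_min x : A x -> exists m, Amin A m /\ dom A x m.
Proof.
have [k Hk] : exists k, (#|[pred y | domb x y]| <= k)%N by exists #|[pred y | domb x y]|.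
elim: k x Hk => [|k IH] x Hk Ax.
  have : (0 < #|[pred y | domb x y]|)%N.
    by apply/card_gt0P; exists x; rewrite inE; apply/domP/dom_refl.
  by rewrite lt0n -leqn0 Hk.
case: (classic (Amin A x)) => [Hm|Hm]; first by exists x; split => //; apply: dom_refl.
have [y [Ay [dxy ndyx]]] : exists y, A y /\ sdom A x y.
  by apply: NNPP => H; apply: Hm; split.
have [m [Hm' dym]] : exists m, Amin A m /\ dom A y m.
  apply: IH Ay; rewrite -ltnS; apply: leq_trans Hk.
  apply: proper_card; apply/properP; split.
    by apply/subsetP => z; rewrite !inE => /domP dz; apply/domP; apply: dom_trans dz.
  exists x; rewrite !inE; first by apply/domP/dom_refl.
  by apply/domP.
by exists m; split => //; apply: dom_trans dym.
Qed.

End Proof.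


Lemma sdom_trans1 (n : nat) (T : 'I_n -> finType) (A : prodX n T -> bool) x y z :
  sdom A x y -> dom A y z -> ~ dom A z x.
Proof. by move=> [_ H] H2 H3; apply: H; apply: dom_trans H2 H3. Qed.

Lemma pref_total (n : nat) (T : 'I_n -> finType) (A : prodX n T -> bool) :
  linear_partition A -> forall i x y, pref A i x y \/ pref A i y x.
Proof.
move=> Hlin i x y; case: (classic (pref A i x y)) => [H|H]; [by left|right].
have [a Ha] := not_all_ex_not _ _ H.
have [Hay Hax] : A (upd a i y) /\ ~ A (upd a i x).
  by split; [apply: NNPP => H1; apply: Ha => H2; case: (H1 H2) | move=> H1; apply: Ha].
move=> b Hb; case: (Hlin i y x a b Hay Hb) => //.
Qed.

Lemma pref_semi (n : nat) (T : 'I_n -> finType) (A : prodX n T -> bool) :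
  linear_partition A -> forall i, semiorder (pref A i).
Proof.
move=> Hlin i; split; first by move=> x a.
have tr : forall x y z, pref A i x y -> pref A i y z -> pref A i x z.
  by move=> x y z H1 H2 a Ha; apply: H1; apply: H2.
split.
- move=> x y z w Hxy Hzw; case: (pref_total Hlin x w) => H; [by left|right].
  exact: tr (tr _ _ _ Hzw H) Hxy.
- move=> x y z w Hxy Hyz; case: (pref_total Hlin x w) => H; [by left|right].
  exact: tr (tr _ _ _ H Hxy) Hyz.
Qed.

Theorem theorem2 (n : nat) (T : 'I_n -> finType) (A : prodX n T -> bool) :
  2 <= n ->
  (forall i, influential A i) ->
  (forall i, pref_antisym A i) ->
  linear_partition A ->
  (model_Fu_under A <-> maximal_antichain A (Amin A)).
Proof.
move=> _ _ Hanti Hlin.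
have achain : antichain A (Amin A).
  move=> x y [Ax Hx] [Ay Hy] [H|H]; case: (eqVneq x y) => // ne.
  - case: Hx; exists y; split => //; split => // H2; case/eqP: ne; exact: dom_anti.
  - case: Hy; exists x; split => //; split => // H2; case/eqP: ne; exact: dom_anti.
split.
- move=> [S [Pset [_ [HS [HP HU]]]]].
  have ES : S = fun i => pref A i by apply: functional_extensionality_dep.
  subst S.
  have PA : forall p, Pset p -> A p.
    move=> p Pp; apply: NNPP => nA; have [[q [Pq Hq]] _] := (proj1 (HU p) (negbT (introF idP nA))).
    exact: (HP q p Pq Pp Hq).
  split => // z Hz.
  case: (boolP (A z)) => Az.
    have [m [Hm dzm]] := exists_min Az.
    have -> : z = m by symmetry; apply: Hz; [left|right|right].
    done.
  have [[p [Pp Hpz]] _] := proj1 (HU z) Az.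
  have Amp : Amin A p.
    split; first exact: PA.
    move=> [y [Ay Hpy]].
    have : ~ (forall q, Pset q -> ~ prodP (fun i => pref A i) y q).
      move=> H; have := proj2 (HU y) (conj (ex_intro _ p (conj Pp Hpy)) H).
      by rewrite /inU Ay.
    move=> H; apply: H => q Pq Hyq.
    apply: (HP p q Pp Pq); split; first exact: dom_trans (proj1 Hpy) (proj1 Hyq).
    move=> Hqp; apply: (proj2 Hpy); exact: dom_trans (proj1 Hyq) Hqp.
  have e : p = z by apply: Hz; [left|right|left; exact: (proj1 Hpz)].
  by move: Az; rewrite -e PA.
- move=> [_ Hmax].
  exists (fun i => pref A i), (Amin A); split; first exact: pref_semi.
  split; first by [].
  split.
    move=> p q [Ap Hp] [Aq _] Hpq; apply: Hp; exists q; split => //.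
  move=> x; split.
  + move=> Ux; have nAx : ~ A x by rewrite /inU in Ux; move/negP: Ux.
    split; last first.
      move=> q [Aq _] [Hxq _]; apply: nAx; exact: up Aq Hxq.
    apply: NNPP => Hno.
    have Amx : Amin A x.
      apply: Hmax => a b Ha Hb Hab.
      case: Ha => [Ha|Ea]; case: Hb => [Hb|Eb]; subst => //.
      * exact: achain.
      * case: (eqVneq a x) => // ne; case: Hab => Hab.
        - case: Hno; exists a; split => //; split => // H2.
          by move/eqP: ne; apply; apply: dom_anti.
        - by case: nAx; apply: up (proj1 Ha) Hab.
      * case: (eqVneq x b) => // ne; case: Hab => Hab.
        - by case: nAx; apply: up (proj1 Hb) Hab.
        - case: Hno; exists b; split => //; split => // H2.
          by move/eqP: ne; apply; apply: dom_anti.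
    exact: nAx (proj1 Amx).
  + move=> [[p [[Ap Hp] Hpx]] Hq]; apply/negP => Ax.
    have [m [Hm dxm]] := exists_min Ax.
    case: (eqVneq x m) => [e|ne].
      by subst m; apply: Hp; exists x.
    apply: (Hq m Hm); split => // H2; move/eqP: ne; apply; exact: dom_anti.
Qed.
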